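(* Let $n\ge 3$ be an integer, $A'=\{3^i-1: 0\le i\le n-2\}$ and $r=3^{n-2}-1$. Then $A'$ is a $B_3$ set of cardinality $n-1$ containing $0$. Consequently, for every integer $k\ge r+1$, setting $m=3k+6r+2$, $a_k=(3m+k)/2$, $A_k=a_k+A'$ and $S_k=\langle\{m\}\cup A_k\rangle_{4m}$, one has $W_0(S_k)=-\binom{n}{3}$.
   Context: $\mathbb N=\{0,1,2,\dots\}$; $[x,y]=\{z\in\mathbb Z: x\le z\le y\}$. A finite nonempty set $A'\subset\mathbb Z$ is a $B_3$ set if for all $x_1,x_2,x_3,y_1,y_2,y_3\in A'$, $x_1+x_2+x_3=y_1+y_2+y_3$ holds only if $(x_1,x_2,x_3)$ is a permutation of $(y_1,y_2,y_3)$. For a finite set $B$ of positive integers and a positive integer $t$, $\langle B\rangle_t=\big(\sum_{x\in B}\mathbb N x\big)\cup\{z\in\mathbb Z: z\ge t\}$; this is a numerical semigroup. A numerical semigroup is a submonoid $S\subseteq\mathbb N$ with $\mathbb N\setminus S$ finite; multiplicity $m=\min(S\setminus\{0\})$; conductor $c=1+\max(\mathbb Z\setminus S)$; $q=\lceil c/m\rceil$, $\rho=qm-c$. Let $S^*=S\setminus\{0\}$, $D=S^*+S^*$, $P=S^*\setminus D$, $L=S\cap[0,c-1]$, $D_q=D\cap[c,c+m-1]$, and $W_0(S)=|P\cap L|\,|L|-q|D_q|+\rho$. *)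

(* Defs.v *)
From mathcomp Require Import all_boot all_order all_algebra.
Set Implicit Arguments. Unset Strict Implicit. Unset Printing Implicit Defensive.
Import GRing.Theory Num.Theory.

(* B_3 set: a finite nonempty set of integers (here given by a list of naturals,
   which suffices since the sets considered are subsets of N) such that equal
   sums of three elements come from permuted triples. *)
Definition B3 (A : seq nat) : Prop :=
  A != [::] /\
  forall x1 x2 x3 y1 y2 y3,
    x1 \in A -> x2 \in A -> x3 \in A -> y1 \in A -> y2 \in A -> y3 \in A ->
    x1 + x2 + x3 = y1 + y2 + y3 -> perm_eq [:: x1; x2; x3] [:: y1; y2; y3].

(* z lies in the additive monoid sum_{x in B} N x.  Coefficients are bounded by z,
   which is no restriction when all elements of B are positive. *)
Definition in_monoid (B : seq nat) (z : nat) : bool :=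
  [exists f : {ffun 'I_(size B) -> 'I_z.+1},
     \sum_(i < size B) f i * nth 0 B i == z].

Definition gen_sg (B : seq nat) (t : nat) : pred nat :=
  fun z => in_monoid B z || (t <= z).

Section W0.
Variables (S : pred nat) (N : nat).
(* N is a bound such that every z >= N lies in S. *)

Definition Sstar (z : nat) : bool := S z && (0 < z).
Definition Dsum (z : nat) : bool :=
  [exists x : 'I_z.+1, exists y : 'I_z.+1,
     [&& Sstar x, Sstar y & x + y == z]].
Definition Prim (z : nat) : bool := Sstar z && ~~ Dsum z.

Definition mult : nat := head 0 [seq z <- iota 1 N.+1 | S z].
Definition conductor : nat := \max_(z < N | ~~ S z) z.+1.
Definition qq : nat := (conductor + mult - 1) %/ mult.
Definition rho : nat := qq * mult - conductor.
Definition cardL : nat := count S (iota 0 conductor).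
Definition cardPL : nat := count Prim (iota 0 conductor).
Definition cardDq : nat := count Dsum (iota conductor mult).

Definition W0 : int :=
  ((cardPL * cardL)%:Z - (qq * cardDq)%:Z + rho%:Z)%R.
End W0.

(* W_0 of the numerical semigroup <B>_t (t is a valid bound for gen_sg B t). *)
Definition W0_gen (B : seq nat) (t : nat) : int := W0 (gen_sg B t) t.

Definition Aprime (n : nat) : seq nat := [seq 3 ^ i - 1 | i <- iota 0 n.-1].

(* Main.v *)
Require Import Defs.
From mathcomp Require Import all_boot all_order all_algebra.
From mathcomp Require Import zify.
Set Implicit Arguments. Unset Strict Implicit. Unset Printing Implicit Defensive.

Definition sum3 (s : seq nat) := sumn [seq 3 ^ e | e <- s].
Definition shr (s : seq nat) := [seq e.-1 | e <- s & 0 < e].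

Lemma sum3_shr s : sum3 s = count (pred1 0) s + 3 * sum3 (shr s).
Proof.
elim: s => [|e s IH] //=; rewrite /sum3 /shr /= in IH *.
case: e => [|e] /=; rewrite IH ?expnS; lia.
Qed.

Lemma size_shr s : size s = count (pred1 0) s + size (shr s).
Proof. elim: s => [|[|e] s IH] //=; rewrite /shr /= in IH *; rewrite IH; lia. Qed.

Lemma sum3_ge s : size s <= sum3 s.
Proof. elim: s => [|e s IH] //=; rewrite /sum3 /= in IH *. have := expn_gt0 3 e; lia. Qed.

Lemma sum3_nil s : sum3 s = 0 \/ 1 <= size s.
Proof. by case: s => [|x s]; [left|right]. Qed.

Lemma count_shr x s : count (pred1 x.+1) s = count (pred1 x) (shr s).
Proof. elim: s => [|[|e] s IH] //=; rewrite /shr /= in IH *; rewrite IH //. Qed.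

Lemma arith3 (S T S' T' c c' X Y u v : nat) : S = T -> S <= 3 -> S' = T' -> S' = c + 3*X -> T' = c' + 3*Y -> S = c + u -> T = c' + v -> u <= X -> v <= Y -> (X = 0 \/ 0 < u) -> (Y = 0 \/ 0 < v) -> c = c' /\ X = Y /\ u = v.
Proof. lia. Qed.

Lemma pow3_count x : forall s t, size s = size t -> size s <= 3 -> sum3 s = sum3 t ->
  count (pred1 x) s = count (pred1 x) t.
Proof.
elim: x => [|x IH] s t hs h3 he.
- have [] := arith3 hs h3 he (sum3_shr s) (sum3_shr t) (size_shr s) (size_shr t) (sum3_ge _) (sum3_ge _) (sum3_nil _) (sum3_nil _) => //.
- have [_ [h1 h2]] := arith3 hs h3 he (sum3_shr s) (sum3_shr t) (size_shr s) (size_shr t) (sum3_ge _) (sum3_ge _) (sum3_nil _) (sum3_nil _).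
  rewrite !count_shr; apply: IH => //.
  by apply: leq_trans h3; rewrite [X in _ <= X](size_shr s) leq_addl.
Qed.

Lemma pow3_perm s t : size s = size t -> size s <= 3 -> sum3 s = sum3 t -> perm_eq s t.
Proof. move=> hs h3 he; apply/allP => x _; apply/eqP; exact: pow3_count. Qed.

Lemma e3 i : 0 < 3 ^ i. Proof. exact: expn_gt0. Qed.

Lemma v2_inj i j i' j' : i <= j -> i' <= j' ->
  (3^i - 1) + (3^j - 1) = (3^i' - 1) + (3^j' - 1) -> i = i' /\ j = j'.
Proof.
move=> h h' e.
have : [:: i; j] = [:: i'; j'].
  apply: (sorted_eq leq_trans anti_leq); rewrite /= ?h ?h' //.
  apply: pow3_perm => //; rewrite /sum3 /=.
  have := e3 i; have := e3 j; have := e3 i'; have := e3 j'; lia.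
by case=> -> ->.
Qed.

Lemma v3_inj i j l i' j' l' : i <= j -> j <= l -> i' <= j' -> j' <= l' ->
  (3^i - 1) + (3^j - 1) + (3^l - 1) = (3^i' - 1) + (3^j' - 1) + (3^l' - 1) ->
  [/\ i = i', j = j' & l = l'].
Proof.
move=> h1 h2 h1' h2' e.
have : [:: i; j; l] = [:: i'; j'; l'].
  apply: (sorted_eq leq_trans anti_leq); rewrite /= ?h1 ?h2 ?h1' ?h2' //.
  apply: pow3_perm => //; rewrite /sum3 /=.
  have := e3 i; have := e3 j; have := e3 i'; have := e3 j'; have := e3 l; have := e3 l'; lia.
by case=> -> -> ->.
Qed.

Definition P2 q := [seq (i, j) | j <- iota 0 q, i <- iota 0 j.+1].
Definition A1 p := [seq 3 ^ i - 1 | i <- iota 0 p].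
Definition A2 p := [seq (3^i - 1) + (3^j - 1) | j <- iota 0 p, i <- iota 0 j.+1].
Definition A3 p := [seq (3^ij.1 - 1) + (3^ij.2 - 1) + (3^l - 1) | l <- iota 0 p, ij <- P2 l.+1].

Lemma memP2 i j q : ((i, j) \in P2 q) = (i <= j < q).
Proof.
apply/allpairsPdep/idP => [[x [y [hx hy [-> ->]]]]|/andP[h1 h2]].
  by move: hx hy; rewrite !mem_iota /=; lia.
by exists j, i; rewrite !mem_iota; split => //; lia.
Qed.

Lemma sumn_iotaS q : sumn [seq j.+1 | j <- iota 0 q] = 'C(q.+1, 2).
Proof.
elim: q => [|q IH] //.
by rewrite -addn1 iotaD map_cat sumn_cat IH /= addn0 add0n addn1 [in RHS]binS bin1 addnC.
Qed.

Lemma size_P2 q : size (P2 q) = 'C(q.+1, 2).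
Proof.
rewrite /P2 size_allpairs_dep -sumn_iotaS; congr sumn; apply: eq_map => j.
by rewrite size_iota.
Qed.

Lemma size_A2 p : size (A2 p) = 'C(p.+1, 2).
Proof.
rewrite /A2 size_allpairs_dep -sumn_iotaS; congr sumn; apply: eq_map => j.
by rewrite size_iota.
Qed.

Lemma size_A1 p : size (A1 p) = p.
Proof. by rewrite size_map size_iota. Qed.

Lemma size_A3 p : size (A3 p) = 'C(p.+2, 3).
Proof.
rewrite /A3 size_allpairs_dep.
elim: p => [|p IH] //.
rewrite -addn1 iotaD map_cat sumn_cat IH add0n.
have -> : sumn [seq size (P2 x.+1) | x <- iota p 1] = size (P2 p.+1) by rewrite /= addn0.
by rewrite size_P2 addn1 [in RHS]binS addnC.
Qed.

Lemma uniq_A1 p : uniq (A1 p).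
Proof.
rewrite map_inj_in_uniq ?iota_uniq // => i j _ _ e.
apply: (expnI (isT : 1 < 3)); have := e3 i; have := e3 j; lia.
Qed.

Lemma uniq_P2 q : uniq (P2 q).
Proof.
apply: allpairs_uniq_dep => [|x _|]; rewrite ?iota_uniq //.
move=> [x y] [x' y'] _ _ /= [-> ->] //.
Qed.

Lemma uniq_A2 p : uniq (A2 p).
Proof.
apply: allpairs_uniq_dep => [|x _|]; rewrite ?iota_uniq //.
move=> u v /allpairsPdep[x [y [hx hy ->]]] /allpairsPdep[x' [y' [hx' hy' ->]]] /= e.
move: hy hy'; rewrite !mem_iota => hy hy'.
have [-> ->] := v2_inj (i:=y) (j:=x) (i':=y') (j':=x') ltac:(lia) ltac:(lia) e.
by [].
Qed.

Lemma uniq_A3 p : uniq (A3 p).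
Proof.
apply: allpairs_uniq_dep => [|x _|]; rewrite ?iota_uniq ?uniq_P2 //.
move=> u v /allpairsPdep[x [[i j] [hx hy ->]]] /allpairsPdep[x' [[i' j'] [hx' hy' ->]]] /= e.
move: hy hy'; rewrite !memP2 => hy hy'.
have [-> -> ->] := v3_inj (i:=i) (j:=j) (l:=x) (i':=i') (j':=j') (l':=x') ltac:(lia) ltac:(lia) ltac:(lia) ltac:(lia) e.
by [].
Qed.

Lemma memA1 p i : i < p -> 3 ^ i - 1 \in A1 p.
Proof. by move=> h; apply: map_f; rewrite mem_iota; lia. Qed.

Lemma memA2 p i j : i < p -> j < p -> (3^i - 1) + (3^j - 1) \in A2 p.
Proof.
wlog h : i j / i <= j.
  move=> W hi hj; case: (leqP i j) => hij; first exact: W.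
  rewrite addnC; apply: W => //; lia.
move=> hi hj; apply/allpairsPdep; exists j, i; rewrite !mem_iota; split => //; lia.
Qed.

Lemma memA3s p i j l : i <= j -> j <= l -> l < p ->
  (3^i - 1) + (3^j - 1) + (3^l - 1) \in A3 p.
Proof.
move=> h1 h2 h3; apply/allpairsPdep; exists l, (i, j); rewrite memP2 mem_iota; split => //; lia.
Qed.

Lemma memA3 p i j l : i < p -> j < p -> l < p ->
  (3^i - 1) + (3^j - 1) + (3^l - 1) \in A3 p.
Proof.
move=> hi hj hl.
case: (leqP i j) => hij; case: (leqP j l) => hjl; case: (leqP i l) => hil.
all: first [ by apply: memA3s; lia
           | by rewrite (_ : _ + _ + _ = (3^i - 1) + (3^l - 1) + (3^j - 1)); [apply: memA3s; lia|lia]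
           | by rewrite (_ : _ + _ + _ = (3^j - 1) + (3^i - 1) + (3^l - 1)); [apply: memA3s; lia|lia]
           | by rewrite (_ : _ + _ + _ = (3^j - 1) + (3^l - 1) + (3^i - 1)); [apply: memA3s; lia|lia]
           | by rewrite (_ : _ + _ + _ = (3^l - 1) + (3^i - 1) + (3^j - 1)); [apply: memA3s; lia|lia]
           | by rewrite (_ : _ + _ + _ = (3^l - 1) + (3^j - 1) + (3^i - 1)); [apply: memA3s; lia|lia]
           | lia ].
Qed.

Lemma bnd1 p i : i < p -> 3 ^ i - 1 <= 3 ^ p.-1 - 1.
Proof. move=> h; have : 3 ^ i <= 3 ^ p.-1 by rewrite leq_exp2l //; lia. lia. Qed.

Lemma A1P p x : x \in A1 p -> exists2 i, i < p & x = 3 ^ i - 1.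
Proof. by move=> /mapP[i]; rewrite mem_iota => h ->; exists i => //; lia. Qed.

Lemma A1_bnd p x : x \in A1 p -> x <= 3 ^ p.-1 - 1.
Proof. by move=> /A1P[i hi ->]; exact: bnd1. Qed.

Lemma A2_bnd p x : x \in A2 p -> x <= 2 * (3 ^ p.-1 - 1).
Proof.
move=> /allpairsPdep[j [i [hj hi ->]]]; move: hj hi; rewrite !mem_iota => hj hi.
have := @bnd1 p i ltac:(lia); have := @bnd1 p j ltac:(lia); lia.
Qed.

Lemma A3_bnd p x : x \in A3 p -> x <= 3 * (3 ^ p.-1 - 1).
Proof.
move=> /allpairsPdep[l [[i j] [hl hij ->]]]; move: hl hij; rewrite mem_iota memP2 /= => hl hij.
have := @bnd1 p i ltac:(lia); have := @bnd1 p j ltac:(lia); have := @bnd1 p l ltac:(lia); lia.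
Qed.

Lemma A2P p x : x \in A2 p -> exists i j, [/\ i < p, j < p & x = (3^i - 1) + (3^j - 1)].
Proof.
move=> /allpairsPdep[j [i [hj hi ->]]]; move: hj hi; rewrite !mem_iota => hj hi.
exists i, j; split => //; lia.
Qed.

Lemma A3P p x : x \in A3 p -> exists i j l, [/\ i < p, j < p, l < p & x = (3^i - 1) + (3^j - 1) + (3^l - 1)].
Proof.
move=> /allpairsPdep[l [[i j] [hl hij ->]]]; move: hl hij; rewrite mem_iota memP2 /= => hl hij.
exists i, j, l; split => //; lia.
Qed.
Set Implicit Arguments. Unset Strict Implicit. Unset Printing Implicit Defensive.

Definition rep (B : seq nat) z := exists s, all (mem B) s /\ sumn s = z.

Lemma in_monoid_rep B z : all (fun x => 0 < x) B -> in_monoid B z <-> rep B z.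
Proof.
move=> Bpos; split.
  move=> /existsP[f /eqP hf].
  exists (\big[cat/[::]]_(i < size B) nseq (f i) (nth 0 B i)); split.
    apply: (big_ind (fun s => all (mem B) s)) => [//|s1 s2 h1 h2|i _].
      by rewrite all_cat h1 h2.
    by rewrite all_nseq /= mem_nth ?orbT.
  rewrite (big_morph sumn sumn_cat (erefl : sumn [::] = 0)); apply: etrans hf.
  by apply: eq_bigr => i _; rewrite sumn_nseq mulnC.
case=> s [hs <-]; elim: s hs => [|g s IH] /=.
  move=> _; apply/existsP; exists [ffun _ => ord0].
  by rewrite big1 // => i _; rewrite ffunE.
move=> /andP[hg /IH /existsP[f /eqP hf]].
have gpos : 0 < g by move/allP: Bpos => /(_ g hg).
have hi0 : index g B < size B by rewrite index_mem.
pose i0 := Ordinal hi0.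
apply/existsP.
exists [ffun i => inord (f i + (i == i0)) : 'I_(g + sumn s).+1].
have E i : nat_of_ord ([ffun i => inord (f i + (i == i0)) : 'I_(g + sumn s).+1] i) = f i + (i == i0).
  rewrite ffunE inordK //; have := ltn_ord (f i); case: (i == i0) => /=; lia.
under eq_bigr => i _ do rewrite E mulnDl.
rewrite big_split /= hf (bigD1 i0) //= eqxx mul1n big1 ?addn0.
  by rewrite nth_index // addnC.
by move=> i /negbTE ->.
Qed.
Set Implicit Arguments. Unset Strict Implicit. Unset Printing Implicit Defensive.
Import GRing.Theory.

Definition rep2 (B : seq nat) z := exists s, [/\ all (mem B) s, 2 <= size s & sumn s = z].

Lemma inseg c X x z : x \in X -> z = c + x -> z \in [seq c + x | x <- X].
Proof. by move=> hx ->; apply: map_f. Qed.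

Lemma cnt_all (P : pred nat) c X : (forall x, x \in X -> P (c + x)) ->
  count P [seq c + x | x <- X] = size X.
Proof. by move=> h; rewrite count_map -(count_predT X); apply: eq_in_count => x /h. Qed.

Lemma cnt_none (P : pred nat) c X : (forall x, x \in X -> ~~ P (c + x)) ->
  count P [seq c + x | x <- X] = 0.
Proof. by move=> h; rewrite count_map -(count_pred0 X); apply: eq_in_count => x /h /negbTE. Qed.

Lemma count_iota_mem (E : seq nat) lo len : uniq E ->
  count (mem E) (iota lo len) = count (fun x => (lo <= x) && (x < lo + len)) E.
Proof.
move=> uE; rewrite -!size_filter; apply: perm_size; apply: uniq_perm.
- by apply: filter_uniq; apply: iota_uniq.
- exact: filter_uniq.
- by move=> x; rewrite !mem_filter mem_iota andbC.
Qed.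

Lemma seg_bnd1 c z : z \in [seq c + x | x <- [:: 0]] -> z = c.
Proof. by rewrite /= inE addn0 => /eqP. Qed.

Section Main.
Variables (p r k m a : nat).
Hypotheses (hp : 2 <= p) (hr : r = 3 ^ p.-1 - 1) (hk : r + 1 <= k)
  (hm : m = 3 * k + 6 * r + 2) (ha : a = 5 * k + 9 * r + 3).

Definition B := m :: [seq a + x | x <- A1 p].
Definition E2 :=
  [seq 2 * m + x | x <- [:: 0]] ++ [seq (m + a) + x | x <- A1 p] ++
  [seq 3 * m + x | x <- [:: 0]] ++ [seq 2 * a + x | x <- A2 p] ++
  [seq (2 * m + a) + x | x <- A1 p] ++ [seq 4 * m + x | x <- [:: 0]] ++
  [seq (m + 2 * a) + x | x <- A2 p] ++ [seq (3 * m + a) + x | x <- A1 p] ++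
  [seq 3 * a + x | x <- A3 p].
Definition E := [seq 0 + x | x <- [:: 0]] ++ [seq m + x | x <- [:: 0]] ++
  [seq a + x | x <- A1 p] ++ E2.

Lemma b1 x : x \in A1 p -> x <= r. Proof. by move/A1_bnd; rewrite hr. Qed.
Lemma b2 x : x \in A2 p -> x <= 2 * r. Proof. by move/A2_bnd; rewrite hr. Qed.
Lemma b3 x : x \in A3 p -> x <= 3 * r. Proof. by move/A3_bnd; rewrite hr. Qed.

Ltac dseg H :=
  rewrite ?mem_cat in H; repeat (case/orP: H => H);
  try (match type of H with is_true false => discriminate H end);
  first [ case/mapP: H => ? /b1 ? H
        | case/mapP: H => ? /b2 ? H
        | case/mapP: H => ? /b3 ? H
        | move/eqP: H => H ].

Ltac sidebnd := intros ? Hx; first [ move: Hx; rewrite inE => /eqP ->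
  | move/b1: Hx | move/b2: Hx | move/b3: Hx ]; lia.

Lemma Bpos : all (fun x => 0 < x) B.
Proof.
rewrite /B /=; apply/andP; split; first lia.
by apply/allP => z /mapP[x _ ->]; lia.
Qed.

Lemma B_ge z : z \in B -> m <= z < 2 * m.
Proof. rewrite /B inE => /orP[/eqP->|/mapP[x /b1 ? ->]]; lia. Qed.

Lemma E2_ge z : z \in E2 -> 2 * m <= z < 5 * m.
Proof. move=> H; rewrite /E2 in H; dseg H; lia. Qed.

Lemma E_rng z : z \in E -> z = 0 \/ (m <= z <= 2 * m + a + r) \/ 4 * m <= z.
Proof. move=> H; rewrite /E /E2 in H; dseg H; lia. Qed.

Lemma uniq_shift c X : uniq X -> uniq [seq c + x | x <- X].
Proof. by move=> u; rewrite map_inj_uniq // => x y /addnI. Qed.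

Lemma uniq_B : uniq B.
Proof.
rewrite /B /= uniq_shift ?uniq_A1 // andbT; apply/negP => H; dseg H; lia.
Qed.

Lemma uniq_E : uniq E.
Proof.
rewrite /E /E2.
repeat (rewrite cat_uniq; apply/and3P; split;
  [ apply: uniq_shift; rewrite ?uniq_A1 ?uniq_A2 ?uniq_A3 //
  | apply/hasPn => y hy; apply/negP => hx; dseg hx; dseg hy; lia
  | ]).
apply: uniq_shift; exact: uniq_A3.
Qed.


Lemma decomp s : all (mem B) s -> exists c0 idx,
  [/\ all (fun i => i < p) idx, size s = c0 + size idx &
      sumn s = c0 * m + sumn [seq a + (3 ^ i - 1) | i <- idx]].
Proof.
elim: s => [|g s IH] /=; first by exists 0, [::].
case/andP => hg /IH [c0 [idx [h1 h2 h3]]].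
move: hg; rewrite /B inE => /orP[/eqP->|/mapP[x /A1P[i hi ->] ->]].
  by exists c0.+1, idx; split => //; rewrite ?h2 ?h3; lia.
exists c0, (i :: idx); split => /=; rewrite ?hi ?h1 ?h2 ?h3 //; lia.
Qed.

Lemma sumn_ge (idx : seq nat) : size idx * a <= sumn [seq a + (3 ^ i - 1) | i <- idx].
Proof. elim: idx => [|i idx IH] //=; lia. Qed.

Lemma mA1 i : i < p -> a + (3 ^ i - 1) \in B.
Proof. by move=> h; rewrite /B inE; apply/orP; right; apply: map_f; apply: memA1. Qed.

Lemma classify s : all (mem B) s -> sumn s < 5 * m ->
  if 2 <= size s then sumn s \in E2 else sumn s \in 0 :: B.
Proof.
move=> hs hlt; have [c0 [idx [h1 h2 h3]]] := decomp hs.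
have hge := sumn_ge idx.
rewrite h2 h3; rewrite h3 in hlt.
have hsz : size idx <= 3 by move: hge hlt; rewrite hm ha; nia.
case: idx h1 h2 h3 hlt hge hsz => [|i [|j [|l [|? ?]]]] //= h1 h2 h3 hlt hge hsz.
- case: c0 h2 h3 hlt => [|[|[|[|[|c0]]]]] h2 h3 hlt; try lia.
  + by rewrite inE.
  + by rewrite /= !inE mul1n addn0 eqxx orbT.
  + by rewrite /= /E2 !mem_cat (@inseg (2 * m) [:: 0] 0) ?inE //; lia.
  + by rewrite /= /E2 !mem_cat (@inseg (3 * m) [:: 0] 0) ?inE ?orbT //; lia.
  + by rewrite /= /E2 !mem_cat (@inseg (4 * m) [:: 0] 0) ?inE ?orbT //; lia.
- rewrite andbT in h1.
  case: c0 h2 h3 hlt => [|[|[|[|c0]]]] h2 h3 hlt; try lia.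
  + by rewrite /= inE mul0n add0n addn0 mA1 ?orbT.
  + by rewrite /= /E2 !mem_cat (@inseg (m+a) (A1 p) (3^i-1)) ?memA1 ?orbT //; lia.
  + by rewrite /= /E2 !mem_cat (@inseg (2 * m + a) (A1 p) (3^i-1)) ?memA1 ?orbT //; lia.
  + by rewrite /= /E2 !mem_cat (@inseg (3 * m + a) (A1 p) (3^i-1)) ?memA1 ?orbT //; lia.
- case/and3P: h1 => hi hj _.
  case: c0 h2 h3 hlt => [|[|c0]] h2 h3 hlt; try lia.
  + by rewrite /= /E2 !mem_cat (@inseg (2 * a) (A2 p) ((3^i-1)+(3^j-1))) ?memA2 ?orbT //; lia.
  + by rewrite /= /E2 !mem_cat (@inseg (m + 2 * a) (A2 p) ((3^i-1)+(3^j-1))) ?memA2 ?orbT //; lia.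
- case/and4P: h1 => hi hj hl _.
  case: c0 h2 h3 hlt => [|c0] h2 h3 hlt; try lia.
  by rewrite /= /E2 !mem_cat (@inseg (3 * a) (A3 p) ((3^i-1)+(3^j-1)+(3^l-1))) ?memA3 ?orbT //; lia.
Qed.

Definition S := gen_sg B (4 * m).

Lemma size_ge s : all (mem B) s -> size s * m <= sumn s.
Proof. elim: s => [|g s IH] //= /andP[/B_ge /andP[hg _] /IH h]; rewrite mulSn; exact: leq_add. Qed.

Lemma rep_S z : rep B z -> S z.
Proof. by move=> h; rewrite /S /gen_sg; apply/orP; left; apply/(in_monoid_rep _ Bpos). Qed.

Lemma S_rep z : z < 4 * m -> S z -> rep B z.
Proof.
rewrite /S /gen_sg => hz /orP[/(in_monoid_rep _ Bpos)//|]; lia.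
Qed.

Lemma E2_rep2 z : z \in E2 -> rep2 B z.
Proof.
have mm : m \in B by rewrite inE eqxx.
rewrite /E2 !mem_cat => H; repeat (case/orP: H => H);
  try (match type of H with is_true false => discriminate H end).
- move/eqP: H => ->; exists [:: m; m]; split => //=; rewrite ?mm //; lia.
- case/mapP: H => x /A1P[i hi ->] ->; exists [:: m; a + (3^i - 1)]; split => //=; rewrite ?mm ?mA1 //; lia.
- move/eqP: H => ->; exists [:: m; m; m]; split => //=; rewrite ?mm //; lia.
- case/mapP: H => x /A2P[i [j [hi hj ->]]] ->.
  exists [:: a + (3^i - 1); a + (3^j - 1)]; split => //=; rewrite ?mA1 //; lia.
- case/mapP: H => x /A1P[i hi ->] ->; exists [:: m; m; a + (3^i - 1)]; split => //=; rewrite ?mm ?mA1 //; lia.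
- move/eqP: H => ->; exists [:: m; m; m; m]; split => //=; rewrite ?mm //; lia.
- case/mapP: H => x /A2P[i [j [hi hj ->]]] ->.
  exists [:: m; a + (3^i - 1); a + (3^j - 1)]; split => //=; rewrite ?mm ?mA1 //; lia.
- case/mapP: H => x /A1P[i hi ->] ->; exists [:: m; m; m; a + (3^i - 1)]; split => //=; rewrite ?mm ?mA1 //; lia.
- case/mapP: H => x /A3P[i [j [l [hi hj hl ->]]]] ->.
  exists [:: a + (3^i - 1); a + (3^j - 1); a + (3^l - 1)]; split => //=; rewrite ?mA1 //; lia.
Qed.

Lemma E_rep z : z \in E -> rep B z.
Proof.
rewrite /E -/E2 mem_cat => /orP[H|]; last rewrite mem_cat => /orP[H|]; last rewrite mem_cat => /orP[H|H].
- move: H; rewrite inE => /eqP ->; by exists [::].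
- move: H; rewrite inE => /eqP ->; exists [:: m]; split => //=; rewrite ?inE ?eqxx //; lia.
- case/mapP: H => x /A1P[i hi ->] ->; exists [:: a + (3^i - 1)]; split => //=; rewrite ?mA1 //; lia.
- by have [s [h1 _ h3]] := E2_rep2 H; exists s.
Qed.

Lemma inE_of z : (z \in 0 :: B) || (z \in E2) -> z \in E.
Proof.
move=> /orP[H|H]; rewrite /E -/E2 3!mem_cat; last by rewrite H !orbT.
move: H; rewrite inE => /orP[/eqP->|]; first by rewrite inE eqxx.
rewrite /B inE => /orP[/eqP->|H]; first by rewrite (@inseg m [:: 0] 0) ?inE ?orbT //; lia.
by rewrite H !orbT.
Qed.

Lemma charS z : z < 4 * m -> S z = (z \in E).
Proof.
move=> hz; apply/idP/idP => [/(S_rep hz)[s [hs hsum]]|/E_rep/rep_S //].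
apply: inE_of; have := classify hs; rewrite hsum => /(_ ltac:(lia)).
by case: ifP => _ ->; rewrite ?orbT.
Qed.

Lemma S_ge_m z : S z -> 0 < z -> m <= z.
Proof.
move=> hS hz; case: (ltnP z (4 * m)) => hz4; last lia.
case/(S_rep hz4): hS => s [hs hsum]; have := classify hs; rewrite hsum => /(_ ltac:(lia)).
case: ifP => _; first by move/E2_ge; lia.
by rewrite inE => /orP[/eqP|/B_ge]; lia.
Qed.

Lemma Dsum_E2 z : z < 5 * m -> Dsum S z = (z \in E2).
Proof.
move=> hz; apply/idP/idP.
  case/existsP => x /existsP[y /and3P[/andP[Sx x0] /andP[Sy y0] /eqP hxy]].
  have mx := S_ge_m Sx x0; have my := S_ge_m Sy y0.
  case/(S_rep (z := x) ltac:(lia)): Sx => sx [hsx ex].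
  case/(S_rep (z := y) ltac:(lia)): Sy => sy [hsy ey].
  have := @classify (sx ++ sy); rewrite all_cat hsx hsy sumn_cat ex ey hxy => /(_ isT hz).
  rewrite size_cat; case: sx hsx ex {hxy} => [|g1 sx] hsx ex; first by move: x0; rewrite -ex.
  case: sy hsy ey => [|g2 sy] hsy ey; first by move: y0; rewrite -ey.
  by rewrite /= addnS ltnS ltnS leq0n.
move/E2_rep2; rewrite /rep2 => -[s]; case: s => [|g [|g' s]] [] //= /andP[hg hs] _ <-.
have gm := B_ge hg.
have hs' := @size_ge (g' :: s) hs; rewrite /= mulSn in hs'.
apply/existsP; exists (inord g); apply/existsP; exists (inord (g' + sumn s)).
rewrite !inordK; try lia.
rewrite eqxx andbT /Sstar; apply/andP; split; apply/andP; split; try lia.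
  apply: rep_S; exists [:: g]; split => //=; rewrite ?hg //; lia.
apply: rep_S; exists (g' :: s); split => //.
Qed.

Lemma uniq_E2 : uniq E2.
Proof.
rewrite /E2.
repeat (rewrite cat_uniq; apply/and3P; split;
  [ apply: uniq_shift; rewrite ?uniq_A1 ?uniq_A2 ?uniq_A3 //
  | apply/hasPn => y hy; apply/negP => hx; dseg hx; dseg hy; lia
  | ]).
apply: uniq_shift; exact: uniq_A3.
Qed.

Ltac sideb := intros ? Hx; cbv beta; first [ move: Hx; rewrite inE => /eqP ->
  | move/b1: Hx | move/b2: Hx | move/b3: Hx ]; lia.

Ltac cnts := repeat first [ rewrite cnt_all; last by sideb | rewrite cnt_none; last by sideb ].

Lemma cntL : count (fun x => (0 <= x) && (x < 0 + 4 * m)) E = 4 + 3 * p + 'C(p.+1, 2).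
Proof.
rewrite /E /E2 !count_cat; cnts.
rewrite size_A1 size_A2 /=; lia.
Qed.

Lemma cntD : count (fun x => (4 * m <= x) && (x < 4 * m + m)) E2 = 1 + p + 'C(p.+1, 2) + 'C(p.+2, 3).
Proof.
rewrite /E2 !count_cat; cnts.
rewrite size_A1 size_A2 size_A3 /=; lia.
Qed.

Lemma cntB : count (fun x => (0 <= x) && (x < 0 + 4 * m)) B = p.+1.
Proof.
rewrite /B /=; cnts; rewrite size_A1; lia.
Qed.

Lemma S_m : S m.
Proof. apply: rep_S; exists [:: m]; split => //=; rewrite ?inE ?eqxx //; lia. Qed.

Lemma mult_eq : mult S (4 * m) = m.
Proof.
rewrite /mult (_ : (4 * m).+1 = (m - 1) + (3 * m + 2)); last lia.
rewrite iotaD filter_cat (_ : 1 + (m - 1) = m); last lia.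
rewrite (@eq_in_filter _ _ pred0); last first.
  move=> z; rewrite mem_iota => hz /=; apply/negbTE/negP => hS.
  have := S_ge_m hS; lia.
rewrite filter_pred0 /= (_ : 3 * m + 2 = (3 * m + 1).+1); last lia.
by rewrite /= S_m.
Qed.

Lemma cond_eq : conductor S (4 * m) = 4 * m.
Proof.
apply/eqP; rewrite eqn_leq; apply/andP; split.
  by apply/bigmax_leqP => i _; exact: ltn_ord.
have h : 4 * m - 1 < 4 * m by lia.
have hS : ~~ S (4 * m - 1) by rewrite charS //; apply/negP => /E_rng; lia.
have := @leq_bigmax_cond _ (fun z : 'I_(4 * m) => ~~ S z) (fun z : 'I_(4 * m) => (nat_of_ord z).+1) (Ordinal h) hS.
rewrite /conductor /=; apply: leq_trans; lia.
Qed.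

Lemma PL_eq : cardPL S (4 * m) = p.+1.
Proof.
rewrite /cardPL cond_eq -cntB -count_iota_mem ?uniq_B //.
apply: eq_in_count => z; rewrite mem_iota => hz.
rewrite /Prim /Sstar charS ?Dsum_E2; try lia.
apply/idP/idP.
  case/andP => /andP[hE h0] hE2.
  move: hE; rewrite /E -/E2 3!mem_cat (negbTE hE2) orbF => /orP[|/orP[|]].
  - by rewrite inE => /eqP hz0; move: h0; rewrite hz0.
  - move=> H; have -> : z = m by move: H; rewrite inE addn0 => /eqP.
    by change (m \in B); rewrite /B inE eqxx.
  - by move=> H; change (z \in B); rewrite /B inE H orbT.
move=> hB0; have hB : z \in B := hB0; have := B_ge hB => hb.
rewrite inE_of; last by rewrite inE hB orbT.
apply/andP; split; first lia.
by apply/negP => /E2_ge; lia.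
Qed.

Lemma L_eq : cardL S (4 * m) = 4 + 3 * p + 'C(p.+1, 2).
Proof.
rewrite /cardL cond_eq -cntL -count_iota_mem ?uniq_E //.
apply: eq_in_count => z; rewrite mem_iota => hz; rewrite charS //; lia.
Qed.

Lemma Dq_eq : cardDq S (4 * m) = 1 + p + 'C(p.+1, 2) + 'C(p.+2, 3).
Proof.
rewrite /cardDq cond_eq mult_eq -cntD -count_iota_mem ?uniq_E2 //.
apply: eq_in_count => z; rewrite mem_iota => hz; rewrite Dsum_E2 //; lia.
Qed.

Lemma qq_eq : qq S (4 * m) = 4.
Proof.
rewrite /qq cond_eq mult_eq (_ : 4 * m + m - 1 = 4 * m + (m - 1)); last lia.
rewrite divnMDl ?divn_small; lia.
Qed.

Lemma rho_eq : rho S (4 * m) = 0.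
Proof. by rewrite /rho qq_eq cond_eq mult_eq subnn. Qed.

Lemma W0_eq : W0 S (4 * m) = (- ('C(p.+1, 3))%:Z)%R.
Proof.
rewrite /W0 PL_eq L_eq Dq_eq qq_eq rho_eq.
have h1 := mul_bin_left p.+1 2.
have h2 := mul_bin_left p.+1 1.
have h3 := binS p.+1 2.
rewrite bin1 in h2.
have e : p.+1 * (4 + 3 * p + 'C(p.+1, 2)) + 'C(p.+1, 3) = 4 * (1 + p + 'C(p.+1, 2) + 'C(p.+2, 3)).
  move: h1 h2 h3; rewrite (_ : p.+1 - 2 = p - 1); last lia. nia.
rewrite -e PoszD addr0 opprD addrA subrr add0r //.
Qed.

End Main.
Theorem mainTheorem7 (n : nat) (hn : 3 <= n) :
  let A' := Aprime n in
  let r := 3 ^ (n - 2) - 1 in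
  [/\ B3 A', size (undup A') = n - 1, 0 \in A' &
   forall k : nat, r + 1 <= k ->
     let m := 3 * k + 6 * r + 2 in
     let a := (3 * m + k) %/ 2 in
     let Ak := [seq a + x | x <- A'] in
     W0_gen (m :: Ak) (4 * m) = (- ('C(n, 3))%:Z)%R].
Proof.
move=> A' r.
have hA : A' = A1 n.-1 by [].
split.
- rewrite hA; split.
    by rewrite -size_eq0 size_A1; lia.
  move=> x1 x2 x3 y1 y2 y3 /A1P[i1 _ ->] /A1P[i2 _ ->] /A1P[i3 _ ->]
    /A1P[j1 _ ->] /A1P[j2 _ ->] /A1P[j3 _ ->] e.
  have : perm_eq [:: i1; i2; i3] [:: j1; j2; j3].
    apply: pow3_perm => //; rewrite /sum3 /=.
    have := e3 i1; have := e3 i2; have := e3 i3; have := e3 j1; have := e3 j2; have := e3 j3; lia.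
  by move/(perm_map (fun i => 3 ^ i - 1)).
- by rewrite hA undup_id ?uniq_A1 // size_A1; lia.
- by rewrite hA (_ : 0 = 3 ^ 0 - 1) // memA1 //; lia.
move=> k hk m a Ak.
have ha : a = 5 * k + 9 * r + 3.
  rewrite /a (_ : 3 * m + k = (5 * k + 9 * r + 3) * 2) ?mulnK //; rewrite /m; lia.
have hr : r = 3 ^ (n.-1).-1 - 1 by rewrite /r; congr (3 ^ _ - _); lia.
have := @W0_eq n.-1 r k m a ltac:(lia) hr hk erefl ha.
rewrite /W0_gen /S /B -hA (_ : n.-1.+1 = n) //; lia.
Qed.
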